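(* Let $p$ be an odd prime and $n\ge 1$ an integer. Let $\phi:\mathbb{P}^1(\mathbb{Q})\to\mathbb{Z}/p\mathbb{Z}$ be a $\Gamma_1(p)$-invariant function (a weight-$0$ boundary symbol of level $\Gamma_1(p)$ with values in $\mathbb{Z}/p\mathbb{Z}$, evaluated at $1$) such that $$\sum_{a\in(\mathbb{Z}/p\mathbb{Z})^\times}\big(\phi(\{\infty\})-\phi(\{a/p\})\big)\not\equiv 0\pmod p.$$ Then $\lambda(\theta_{n,\phi})=p^n-1$.
   Context: For $m\ge1$ let $G_m=\mathrm{Gal}(\mathbb{Q}(\mu_{p^m})/\mathbb{Q})$, identified with $(\mathbb{Z}/p^m\mathbb{Z})^\times$ via $a\mapsto\sigma_a$, $\sigma_a(\zeta)=\zeta^a$. Let $K_n\subset\mathbb{Q}(\mu_{p^{n+1}})$ be the unique subfield of degree $p^n$ over $\mathbb{Q}$, $\mathcal{G}_n=\mathrm{Gal}(K_n/\mathbb{Q})$ (cyclic of order $p^n$), and $\pi_n:G_{n+1}\to\mathcal{G}_n$ the restriction map. For such $\phi$, the level-$n$ Mazur–Tate element $\theta_{n,\phi}\in(\mathbb{Z}/p\mathbb{Z})[\mathcal{G}_n]$ is the image under $\pi_n$ of $\sum_{a\in(\mathbb{Z}/p^{n+1}\mathbb{Z})^\times}\big(\phi(\{\infty\})-\phi(\{a/p^{n+1}\})\big)\sigma_a$. Choosing a generator $\gamma_n$ of $\mathcal{G}_n$ and setting $T=\gamma_n-1$, every $F\in(\mathbb{Z}/p\mathbb{Z})[\mathcal{G}_n]$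 is uniquely $F=\sum_{i=0}^{p^n-1}a_iT^i$ with $a_i\in\mathbb{Z}/p\mathbb{Z}$; its $\lambda$-invariant is $\lambda(F)=\min\{i:a_i\ne0\}$ ($\infty$ if $F=0$), independent of the choice of $\gamma_n$. *)

(* Defs.v *)
From HB Require Import structures.
From mathcomp Require Import all_boot all_order all_algebra all_fingroup.
Set Implicit Arguments. Unset Strict Implicit. Unset Printing Implicit Defensive.
Import Order.TTheory GRing.Theory Num.Theory.
Local Open Scope ring_scope.

(* P^1(Q): None is the point at infinity, Some r the rational r. *)
Definition P1Q := option rat.

(* Moebius action of the integer matrix [[a,b],[c,d]] on P^1(Q). *)
Definition mob (a b c d : int) (x : P1Q) : P1Q :=
  match x with
  | None => if c == 0 then None else Some (a%:~R / c%:~R)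
  | Some r => let den := c%:~R * r + d%:~R in
              if den == 0 then None else Some ((a%:~R * r + b%:~R) / den)
  end.

Definition Gamma1_invariant (p : nat) (T : Type) (phi : P1Q -> T) : Prop :=
  forall a b c d : int, a * d - b * c = 1 ->
    (c = 0 %[mod p%:Z])%Z -> (a = 1 %[mod p%:Z])%Z -> (d = 1 %[mod p%:Z])%Z ->
    forall x, phi (mob a b c d x) = phi x.

(* G_{n+1} = Gal(Q(mu_{p^{n+1}})/Q) identified with (Z/p^{n+1}Z)^x. *)
Definition Um (p n : nat) := {unit 'Z_(p ^ n.+1)}.

(* Gal(Q(mu_{p^{n+1}})/K_n): the unique subgroup of order p-1 of the cyclic
   group G_{n+1}, i.e. the elements killed by p-1. *)
Definition Hn (p n : nat) : {group Um p n} :=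
  <<[set u : Um p n | (u ^+ p.-1 == 1)%g]>>%G.

(* calG_n = Gal(K_n/Q) = G_{n+1} / Gal(Q(mu_{p^{n+1}})/K_n), and the restriction pi_n. *)
Definition Gn (p n : nat) := coset_of (Hn p n).
Definition pin (p n : nat) (u : Um p n) : Gn p n := coset (Hn p n) u.

(* Group ring R[G] as finitely supported coefficient functions. *)
Definition conv (G : finGroupType) (R : nzRingType) (F1 F2 : {ffun G -> R})
  : {ffun G -> R} := [ffun x => \sum_(y : G) F1 y * F2 (y^-1 * x)%g].
Definition delta (G : finGroupType) (R : nzRingType) (g : G) : {ffun G -> R} :=
  [ffun x => (x == g)%:R].
Definition Tgen (G : finGroupType) (R : nzRingType) (gam : G) : {ffun G -> R} :=
  delta R gam - delta R 1%g.
Definition Tpow (G : finGroupType) (R : nzRingType) (gam : G) (i : nat)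
  : {ffun G -> R} := iter i (conv (Tgen R gam)) (delta R 1%g).

(* lambda(F) = k: for (every) generator gamma of G, writing
   F = sum_{i < #|G|} a_i T^i (T = gamma - 1), the least i with a_i != 0 is k. *)
Definition lambda_is (G : finGroupType) (R : nzRingType) (F : {ffun G -> R})
  (k : nat) : Prop :=
  forall gam : G, <[gam]>%g = [set: G] ->
    exists a : nat -> R,
      F = \sum_(i < #|G|) [ffun x => a i * Tpow R gam i x] /\
      (forall i, (i < k)%N -> a i = 0) /\ a k != 0.

(* The level-n Mazur-Tate element theta_{n,phi} in (Z/pZ)[calG_n]: the image under
   pi_n of sum_a (phi(oo) - phi(a/p^{n+1})) sigma_a, a in (Z/p^{n+1}Z)^x
   (representative of a taken in [0, p^{n+1})). *)
Definition theta (p n : nat) (phi : P1Q -> 'F_p) : {ffun Gn p n -> 'F_p} :=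
  [ffun g => \sum_(u : Um p n | pin u == g)
     (phi None - phi (Some ((val (val u) : nat)%:R / (p ^ n.+1)%:R)))].

(* Main.v *)
Require Import Defs.
From HB Require Import structures.
From mathcomp Require Import all_boot all_order all_algebra all_fingroup all_solvable.
From mathcomp Require Import ring zify.
Set Implicit Arguments. Unset Strict Implicit. Unset Printing Implicit Defensive.
Import Order.TTheory GRing.Theory Num.Theory.
Lemma binom_approx c k : exists t, (1 + c) ^ k = 1 + k * c + c ^ 2 * t.
Proof.
elim: k => [|k [t IH]]; first by exists 0; rewrite expn0 muln0 addn0.
exists (k + t + c * t); rewrite [(1 + c) ^ _]expnS IH !(expnS c) ?expn1 ?expn0; nia.
Qed.

Lemma lift_mod p x j : (1 < p) -> x %% p = 1 ->
  exists m, x ^ (p ^ j) = 1 + p ^ j.+1 * m.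
Proof.
move=> p1 hx; elim: j => [|j [m IH]].
  exists (x %/ p); rewrite expn0 expn1 expn1 {1}(divn_eq x p) hx; lia.
have [t Ht] := binom_approx (p ^ j.+1 * m) p.
exists (m + p ^ j * m ^ 2 * t).
rewrite expnS mulnC expnM IH Ht !expnS; nia.
Qed.

Lemma fermat_pow p a k : prime p -> coprime a p -> a ^ (p ^ k) = a %[mod p].
Proof.
move=> pp cap.
have F : forall b, coprime b p -> b ^ p = b %[mod p].
  move=> b cb; have := Euler_exp_totient cb; rewrite totient_prime //.
  have p0 : 0 < p by apply: prime_gt0.
  move=> E; rewrite -{1}(prednK p0) expnS -modnMm E modnMm muln1 //.
elim: k => [|k IH]; first by rewrite expn0 expn1.
rewrite expnS mulnC expnM -modnXm IH modnXm F //.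
Qed.

Section PartB.
Variables (p n : nat).
Hypothesis pp : prime p.
Local Notation N := (p ^ n.+1)%N.
Local Notation U := (Um p n).

Lemma p_gt1 : (1 < p)%N. Proof. exact: prime_gt1. Qed.
Lemma N_gt1 : (1 < N)%N.
Proof. by rewrite (leq_trans p_gt1) // -{1}(expn1 p) leq_exp2l ?p_gt1. Qed.
Lemma NM : (Zp_trunc N).+2 = N. Proof. exact: Zp_cast N_gt1. Qed.

Definition vu (u : U) : nat := val (val u).

Lemma vuM u v : vu (u * v)%g = (vu u * vu v) %% N.
Proof. rewrite /vu /=; congr (_ %% _); exact: NM. Qed.

Lemma vuX u k : vu (u ^+ k)%g = (vu u ^ k) %% N.
Proof. rewrite /vu unit_Zp_expg /=; congr (_ %% _); exact: NM. Qed.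

Lemma vu1 : vu 1%g = 1%N.
Proof. by rewrite /vu /=. Qed.

Lemma vu_inj : injective vu.
Proof. by move=> u v /val_inj /val_inj. Qed.

Lemma vu_coprime u : coprime N (vu u).
Proof.
have := valP u; rewrite -[val u]natr_Zp unitZpE ?N_gt1 //.
Qed.


Definition ru (u : U) : nat := vu u %% p.

Lemma p_dvd_N : (p %| N)%N. Proof. by rewrite dvdn_exp. Qed.

Lemma ruM u v : ru (u * v)%g = (ru u * ru v) %% p.
Proof. by rewrite /ru vuM (modn_dvdm _ p_dvd_N) modnMm. Qed.

Lemma ruX u k : ru (u ^+ k)%g = (ru u ^ k) %% p.
Proof. by rewrite /ru vuX (modn_dvdm _ p_dvd_N) modnXm. Qed.

Lemma ru1 : ru 1%g = 1%N.
Proof. by rewrite /ru vu1 modn_small ?p_gt1. Qed.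

Lemma ru_coprime u : coprime (ru u) p.
Proof.
rewrite /ru coprime_modl coprime_sym.
by have := vu_coprime u; rewrite coprime_pexpl.
Qed.

Lemma ru_lt u : (ru u < p)%N. Proof. by rewrite /ru ltn_pmod ?prime_gt0. Qed.

Lemma lift_unit u : ru u = 1%N -> (u ^+ (p ^ n))%g = 1%g.
Proof.
move=> h; apply: vu_inj; rewrite vuX vu1.
have [m ->] := lift_mod n p_gt1 h.
by rewrite addnC mulnC modnMDl modn_small ?N_gt1.
Qed.


Lemma Hn_set : group_set [set u : U | (u ^+ p.-1 == 1)%g].
Proof.
apply/group_setP; split; first by rewrite inE expg1n.
move=> x y; rewrite !inE => /eqP hx /eqP hy.
by rewrite expgMn ?hx ?hy ?mulg1 //; apply: unit_Zp_mulgC.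
Qed.

Lemma mem_Hn u : (u \in Hn p n) = (u ^+ p.-1 == 1)%g.
Proof. by rewrite /Hn /= gen_set_id ?Hn_set // inE. Qed.

Lemma all_norm u : (u \in 'N(Hn p n))%g.
Proof.
have ab : abelian [set: U] by apply: units_Zp_abelian.
by apply: (subsetP (sub_abelian_norm ab (subsetT _))); rewrite inE.
Qed.

Lemma ru_inj u1 u2 : pin u1 = pin u2 -> ru u1 = ru u2 -> u1 = u2.
Proof.
move=> hp hr.
set h := (u1^-1 * u2)%g.
have hH : h \in Hn p n.
  apply: coset_idr; first exact: all_norm.
  rewrite /h morphM ?morphV ?groupV ?all_norm // /=; rewrite -/(pin u1) -/(pin u2) hp mulVg //.
have hr1 : ru h = 1%N.
  rewrite /h ruM -hr -ruM mulVg; exact: ru1.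
have e1 := lift_unit hr1.
have e2 : (h ^+ p.-1 == 1)%g by rewrite -mem_Hn.
have : (#[h] %| gcdn (p ^ n) p.-1)%g.
  by rewrite dvdn_gcd !order_dvdn e1 eqxx e2.
have cop : coprime (p ^ n) p.-1.
  by apply: coprimeXl; rewrite -{1}(prednK (prime_gt0 pp)) coprimeSn.
rewrite (eqP cop) dvdn1 order_eq1 /h => /eqP e.
by rewrite -(mulKVg u1 u2) e mulg1.
Qed.


Lemma card_U : #|[set: U]| = (p.-1 * p ^ n)%N.
Proof.
have := card_units_Zp (p := N) (ltnW N_gt1); rewrite /units_Zp => ->.
by rewrite totient_pfactor.
Qed.

Lemma teich_in y : (y ^+ (p ^ n))%g \in Hn p n.
Proof.
rewrite mem_Hn -expgM mulnC -card_U expg_cardG // inE //.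
Qed.

Lemma ru_teich y : ru (y ^+ (p ^ n))%g = ru y.
Proof.
rewrite ruX fermat_pow ?ru_coprime // modn_small //; exact: ru_lt.
Qed.

Lemma unit_of_nat b : coprime b p -> exists z : U, vu z = b %% N.
Proof.
move=> cb.
have Ub : ((b%:R : 'Z_N) \is a GRing.unit)%R.
  by rewrite unitZpE ?N_gt1 //; apply: coprimeXl; rewrite coprime_sym.
exists (FinRing.Unit Ub); rewrite /vu /=; exact: val_Zp_nat N_gt1 b.
Qed.

Lemma ru_surj (g : Gn p n) b : coprime b p -> (b < p)%N ->
  exists u, pin u = g /\ ru u = b.
Proof.
move=> cb bp.
have [z hz] := unit_of_nat cb.
set x := repr g.
have hx : pin x = g by rewrite /pin /x coset_reprK.
exists (x * (x^-1 * z) ^+ (p ^ n))%g; split.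
  by rewrite /pin coset_kerr ?teich_in.
rewrite ruM ru_teich ruM modnMmr mulnA -modnMml -ruM mulgV ru1 mul1n.
have bN : (b < N)%N by rewrite (leq_trans bp) // -{1}(expn1 p) leq_exp2l ?p_gt1.
by rewrite /ru hz (modn_small bN) !(modn_small bp).
Qed.


Definition rord (u : U) : 'I_p := Ordinal (ru_lt u).

Lemma rord_img (g : Gn p n) :
  rord @: [set u : U | pin u == g] = [set b : 'I_p | val b != 0%N].
Proof.
apply/setP => b; rewrite inE; apply/imsetP/idP.
  move=> [u _ ->] /=; apply/negP => /eqP h0.
  by have := ru_coprime u; rewrite h0 coprime_sym /coprime gcdn0 => /eqP e; move: p_gt1; rewrite e.
move=> hb.
have cb : coprime b p.
  rewrite coprime_sym prime_coprime //; apply/negP => /dvdn_leq.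
  by rewrite lt0n hb => /(_ isT); rewrite leqNgt ltn_ord.
have [u [hu hr]] := ru_surj g cb (ltn_ord b).
by exists u; [rewrite inE hu | apply: val_inj].
Qed.

Lemma coset_sum (R : nmodType) (f : nat -> R) (g : Gn p n) :
  (\sum_(u : U | pin u == g) f (ru u) = \sum_(1 <= b < p) f b)%R.
Proof.
have inj : {in [set u : U | pin u == g] &, injective rord}.
  move=> u1 u2; rewrite !inE => /eqP h1 /eqP h2 /(congr1 val) /= e.
  by apply: ru_inj => //; rewrite h1 h2.
have -> : (\sum_(u : U | pin u == g) f (ru u) = \sum_(u in [set u : U | pin u == g]) f (rord u))%R.
  by apply: eq_bigl => u; rewrite inE.
rewrite -(big_imset (fun b : 'I_p => f b) inj) rord_img.
rewrite (eq_bigl (fun b : 'I_p => val b != 0%N)); last by move=> b; rewrite inE.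
rewrite -(big_mkord (fun b => b != 0%N) f) big_mkcond (big_ltn (prime_gt0 pp)) /= add0r.
by apply: eq_big_nat => i /andP [hi _]; rewrite -lt0n hi.
Qed.

Lemma coset_card (g : Gn p n) : #|[set u : U | pin u == g]| = p.-1.
Proof.
have := coset_sum (fun _ => 1%N) g; rewrite sum_nat_const_nat muln1 subn1 => <-.
by rewrite sum1_card cardsE.
Qed.


Lemma card_Gn : #|{: Gn p n}| = (p ^ n)%N.
Proof.
have e : #|{: U}| = (#|{: Gn p n}| * p.-1)%N.
  rewrite -sum1_card (partition_big (@pin p n) xpredT) //=.
  under eq_bigr => g _ do rewrite sum1dep_card coset_card.
  by rewrite sum_nat_const.
have := card_U; rewrite cardsT e mulnC => /eqP.
rewrite eqn_mul2l -[_ == 0%N]negbK -lt0n -ltnS prednK ?prime_gt0 // p_gt1 /=.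
by move/eqP.
Qed.

End PartB.

Local Open Scope ring_scope.

Section PartC.
Variables (G : finGroupType) (R : nzRingType) (gam : G).

Definition Epoly (K : nat) (P : {poly R}) : {ffun G -> R} :=
  [ffun x => \sum_(i < K) P`_i * (x == (gam ^+ i)%g)%:R].

Lemma conv_delta_l (g : G) (F : {ffun G -> R}) x :
  \sum_(y : G) (y == g)%:R * F (y^-1 * x)%g = F (g^-1 * x)%g.
Proof.
rewrite (bigD1 g) //= eqxx mul1r big1 ?addr0 // => y /negPf ->; by rewrite mul0r.
Qed.

Lemma conv_T (F : {ffun G -> R}) x :
  conv (Tgen R gam) F x = F (gam^-1 * x)%g - F x.
Proof.
rewrite /conv /Tgen ffunE.
under eq_bigr => y _ do rewrite !ffunE mulrBl.
by rewrite sumrB !conv_delta_l invg1 mul1g.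
Qed.

Lemma conv_T_E K (P : {poly R}) : (size P <= K)%N ->
  conv (Tgen R gam) (Epoly K P) = Epoly K.+1 (('X - 1) * P).
Proof.
move=> sP; apply/ffunP => x; rewrite conv_T !ffunE.
under [in RHS]eq_bigr => i _ do rewrite mulrBl mul1r coefB coefXM mulrBl.
rewrite sumrB big_ord_recl /= mul0r add0r.
rewrite [X in _ = _ - X](big_ord_recr K) /= (nth_default 0 sP) mul0r addr0.
congr (_ - _); apply: eq_bigr => i _.
rewrite /= /bump /= add1n.
by rewrite (canF_eq (mulKVg gam)) expgS.
Qed.

Lemma Tpow_E i : Tpow R gam i = Epoly i.+1 (('X - 1) ^+ i).
Proof.
elim: i => [|i IH].
  apply/ffunP => x; rewrite /Tpow /= !ffunE big_ord1 expr0 coef1 /= mul1r.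
  by rewrite expg0.
rewrite /Tpow iterS -/(Tpow R gam i) IH conv_T_E ?exprS //.
by rewrite -polyC1 size_exp_XsubC.
Qed.



End PartC.

Lemma poly_geom (F : fieldType) (p k : nat) : prime p -> p \in [pchar F] ->
  ('X - 1) ^+ (p ^ k).-1 = \sum_(i < p ^ k) ('X : {poly F}) ^+ i.
Proof.
move=> pp pc.
have hm : (0 < p ^ k)%N by rewrite expn_gt0 prime_gt0.
have nat_pc : [pchar {poly F}].-nat (p ^ k)%N.
  have pc' : p \in [pchar {poly F}] by rewrite pchar_poly.
  by rewrite pnatX (eq_pnat _ (pcharf_eq pc')) pnat_id.
apply: (@mulfI _ ('X - 1)); first by rewrite -polyC1 polyXsubC_eq0.
rewrite -exprS prednK // -subrX1 exprDn_pchar // exprNn_pchar //.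
by rewrite expr1n.
Qed.

Lemma Tpow_ones (F : fieldType) (G : finGroupType) (gam : G) (p k : nat) :
  prime p -> p \in [pchar F] -> #[gam]%g = (p ^ k)%N ->
  forall x, x \in <[gam]>%g -> Tpow F gam (p ^ k).-1 x = 1.
Proof.
move=> pp pc og x xg.
have hm : (0 < p ^ k)%N by rewrite expn_gt0 prime_gt0.
rewrite Tpow_E prednK // poly_geom // ffunE.
have hc : forall j : 'I_(p ^ k), (\sum_(i < p ^ k) ('X : {poly F}) ^+ i)`_j = 1.
  move=> j; rewrite coef_sum (bigD1 j) //= coefXn eqxx big1 ?addr0 //.
  by move=> i /negPf; rewrite coefXn eq_sym -val_eqE /= => ->.
under eq_bigr => j _ do rewrite hc mul1r.
have [k0 k0lt ->] := cyclePmin xg.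
rewrite og in k0lt.
rewrite (bigD1 (Ordinal k0lt)) //= eqxx big1 ?addr0 //.
move=> j /negPf hj; rewrite eq_expg_mod_order og !modn_small //.
by rewrite -val_eqE /= in hj; rewrite eq_sym hj.
Qed.

Lemma bezout_nat (x y : nat) : coprime x y ->
  exists u v : int, u * x%:Z + v * y%:Z = 1.
Proof.
move=> cxy; have [u [v E]] := Bezoutz x%:Z y%:Z.
exists u, v; rewrite E /gcdz /=; by rewrite (eqP cxy).
Qed.

Lemma modz_dvd (d x y : int) : (d %| x - y)%Z -> (x = y %[mod d])%Z.
Proof. by move=> h; apply/eqP; rewrite eqz_mod_dvd. Qed.

Lemma phi_reduce (p n : nat) (T : Type) (phi : P1Q -> T) :
  prime p -> Gamma1_invariant p phi -> forall a : nat, coprime a p ->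
  phi (Some (a%:R / (p ^ n.+1)%:R)) = phi (Some ((a %% p)%:R / p%:R)).
Proof.
move=> pp Hinv a cap.
set b := (a %% p)%N; set q := (a %/ p)%N.
have ea : a = (q * p + b)%N by rewrite /q /b -divn_eq.
have cbp : coprime b p by rewrite /b coprime_modl.
have caN : coprime a (p ^ n.+1) by rewrite coprimeXr.
have [v0 [w0 E1]] := bezout_nat cbp.
have [t0 [s0 E2]] := bezout_nat caN.
set N : int := (p ^ n.+1)%N%:Z.
have eN : N = p%:Z * (p ^ n)%N%:Z by rewrite /N expnS PoszM.
have eaz : a%:Z = q%:Z * p%:Z + b%:Z by rewrite ea PoszD PoszM.
set al := a%:Z * v0 + s0 * p%:Z.
set be := - s0 * b%:Z + a%:Z * w0.
set ga := N * v0 - t0 * p%:Z.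
set de := t0 * b%:Z + N * w0.
have Hdet : al * de - be * ga = 1.
  have -> : al * de - be * ga = (t0 * a%:Z + s0 * N) * (v0 * b%:Z + w0 * p%:Z).
    rewrite /al /be /ga /de; ring.
  by rewrite E1 E2 mulr1.
have Hc : (ga = 0 %[mod p%:Z])%Z.
  apply: modz_dvd; rewrite subr0 /ga eN.
  have -> : p%:Z * (p ^ n)%N%:Z * v0 - t0 * p%:Z = p%:Z * ((p ^ n)%N%:Z * v0 - t0) by ring.
  exact: dvdz_mulr.
have Ha : (al = 1 %[mod p%:Z])%Z.
  apply: modz_dvd; rewrite -E1 /al eaz.
  have -> : (q%:Z * p%:Z + b%:Z) * v0 + s0 * p%:Z - (v0 * b%:Z + w0 * p%:Z)
     = p%:Z * (q%:Z * v0 + s0 - w0) by ring.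
  exact: dvdz_mulr.
have Hd : (de = 1 %[mod p%:Z])%Z.
  apply: modz_dvd; rewrite -E2 -/N /de eaz eN.
  have -> : t0 * b%:Z + p%:Z * (p ^ n)%N%:Z * w0 - (t0 * (q%:Z * p%:Z + b%:Z) + s0 * (p%:Z * (p ^ n)%N%:Z))
     = p%:Z * (- q%:Z * t0 + (p ^ n)%N%:Z * (w0 - s0)) by ring.
  exact: dvdz_mulr.
have Enum : al * b%:Z + be * p%:Z = a%:Z.
  have -> : al * b%:Z + be * p%:Z = a%:Z * (v0 * b%:Z + w0 * p%:Z) by rewrite /al /be; ring.
  by rewrite E1 mulr1.
have Eden : ga * b%:Z + de * p%:Z = N.
  have -> : ga * b%:Z + de * p%:Z = N * (v0 * b%:Z + w0 * p%:Z) by rewrite /ga /de; ring.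
  by rewrite E1 mulr1.
have := Hinv al be ga de Hdet Hc Ha Hd (Some ((a %% p)%:R / p%:R)).
rewrite /mob -/b.
have p0 : (p%:R : rat) != 0 by rewrite pnatr_eq0 -lt0n prime_gt0.
have N0 : (N%:~R : rat) != 0 by rewrite /N intr_eq0 eqz_nat expn_eq0 negb_and -lt0n prime_gt0.
have Eden' : ga%:~R * (b%:R / p%:R) + de%:~R = N%:~R / (p%:R : rat).
  have h : (ga * b%:Z + de * p%:Z)%:~R = N%:~R :> rat by rewrite Eden.
  rewrite intrD !intrM in h; rewrite -h; field; done.
have Enum' : al%:~R * (b%:R / p%:R) + be%:~R = a%:~R / (p%:R : rat).
  have h : (al * b%:Z + be * p%:Z)%:~R = a%:Z%:~R :> rat by rewrite Enum.
  rewrite intrD !intrM in h; rewrite -h; field; done.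
rewrite Eden' mulf_eq0 (negPf N0) invr_eq0 (negPf p0) /= Enum' => <-.
congr (phi (Some _)); rewrite /N; field; apply/andP; split => //.
Qed.


Unset Implicit Arguments.

Theorem theorem4p7 (p n : nat) (phi : P1Q -> 'F_p) :
  prime p -> odd p -> (0 < n)%N -> Gamma1_invariant p phi ->
  \sum_(1 <= a < p) (phi None - phi (Some (a%:R / p%:R))) != 0 ->
  lambda_is (@theta p n phi) (p ^ n - 1)%N.
Proof.
move=> pp op n0 Hinv Hc.
set c := \sum_(1 <= a < p) (phi None - phi (Some (a%:R / p%:R))) in Hc.
have Htheta : forall g, theta n phi g = c.
  move=> g; rewrite /theta ffunE.
  rewrite /c -(coset_sum pp (fun b => phi None - phi (Some (b%:R / p%:R))) g).
  apply: eq_bigr => u _; rewrite /ru /vu phi_reduce //.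
  by have := vu_coprime pp u; rewrite coprime_pexpl // coprime_sym.
move=> gam hgen.
have og : #[gam]%g = (p ^ n)%N by rewrite /order hgen cardsT card_Gn.
have hlt : (p ^ n - 1 < #|{: Gn p n}|)%N.
  by rewrite card_Gn // ltn_subrL expn_gt0 (prime_gt0 pp).
exists (fun i => if i == (p ^ n - 1)%N then c else 0); split; last split.
- apply/ffunP => x; rewrite Htheta sum_ffunE (bigD1 (Ordinal hlt)) //= ffunE eqxx.
  rewrite big1 ?addr0.
    have e1 : (p ^ n - 1)%N = (p ^ n).-1 by rewrite subn1.
    rewrite e1 (Tpow_ones (p := p) (k := n) _ _ og) ?mulr1 //; first exact: pchar_Fp.
    by rewrite hgen inE.
  move=> i hi; rewrite ffunE; case: eqP => [e|]; last by rewrite mul0r.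
  by move: hi; rewrite -val_eqE /= e eqxx.
- by move=> i hi; rewrite ltn_eqF.
- by rewrite eqxx.
Qed.
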